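(* Let $(X_n)_{n\ge0}$ be a Markov chain on a measurable space $E$ with Markov transitions $M(x,dy)$, starting at $X_0=x$, and let $H$ be a positive measurable function on $E$. Assume there exist a positive measurable function $h$ on $E$ (with $0<M(1/h)<\infty$) and parameters $\epsilon_h\in]0,1[$, $\kappa_h\in]0,\infty[$ such that for all $x,y\in E$, $$H^h(x):=H(x)\,h(x)\,M(1/h)(x)\le1-\epsilon_h\quad\text{and}\quad M(1/h)(x)\le\kappa_h\,M(1/h)(y).$$ Let $X^{1/h}_n$ be the Markov chain with transitions $M^{1/h}(x,dy):=M(x,dy)\frac{h^{-1}(y)}{M(h^{-1})(x)}$. Then for any $n\ge1$ and any bounded measurable $F$ on $E^n$, $$\mathbb E\Big(F(X_1,\dots,X_n)\prod_{1\le k\le n}H(X_k)\,\Big|\,X_0=x\Big)=\mathbb E\Big(F(X^{1/h}_1,\dots,X^{1/h}_n)\frac{M(h^{-1})(X^{1/h}_0)}{M(h^{-1})(X^{1/h}_n)}\prod_{1\le k\le n}H^h(X^{1/h}_k)\,\Big|\,X^{1/h}_0=x\Big).$$ Moreover, $$\sup_x\mathbb E\Big(\prod_{1\le k\le n}H(X_k)\,\Big|\,X_0=x\Big)\le\kappa_h(1-\epsilon_h)^n.$$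
   Context: $M(f)(x):=\int M(x,dy)f(y)$ and $h^{-1}:=1/h$. *)

(* Defs.v *)
From HB Require Import structures.
From mathcomp Require Import all_boot all_order all_algebra.
From mathcomp Require Import all_classical all_reals all_analysis.
Set Implicit Arguments. Unset Strict Implicit. Unset Printing Implicit Defensive.
Import Order.TTheory GRing.Theory Num.Theory.
Local Open Scope classical_set_scope.
Local Open Scope ring_scope.
Local Open Scope ereal_scope.

Section markov_defs.
Context (R : realType) (d : measure_display) (E : measurableType d).

Definition Mop (M : R.-pker E ~> E) (g : E -> \bar R) (x : E) : \bar R :=
  \int[M x]_y g y.

Definition Minvh (M : R.-pker E ~> E) (h : E -> R) (x : E) : \bar R :=
  \int[M x]_y ((h y)^-1)%:E.

(* M(h^{-1})(x) as a real number (finite under the standing assumption) *)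
Definition mh (M : R.-pker E ~> E) (h : E -> R) (x : E) : R := fine (Minvh M h x).

Definition Hh (M : R.-pker E ~> E) (H h : E -> R) (x : E) : R :=
  (H x * h x * mh M h x)%R.

Definition Mtw (M : R.-pker E ~> E) (h : E -> R) (g : E -> \bar R) (x : E) : \bar R :=
  \int[M x]_y (g y * ((h y)^-1 / mh M h x)%:E).

(* chain_exp K n G x = E( G([:: X_1; ...; X_n]) | X_0 = x ) for the Markov chain
   whose one-step operator is K (K g x = \int K(x,dy) g(y)). *)
Fixpoint chain_exp (K : (E -> \bar R) -> E -> \bar R) (n : nat)
    (G : seq E -> \bar R) (x : E) : \bar R :=
  match n with
  | 0 => G [::]
  | m.+1 => K (fun y => chain_exp K m (fun s => G (y :: s)) y) x
  end.

End markov_defs.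

(* Main.v *)
Require Import Defs.
From HB Require Import structures.
From mathcomp Require Import all_boot all_order all_algebra.
From mathcomp Require Import all_classical all_reals all_analysis.
From mathcomp Require Import ring lra.
Import Order.TTheory GRing.Theory Num.Theory.
Local Open Scope classical_set_scope.
Local Open Scope ring_scope.
Local Open Scope ereal_scope.

Section aux.
Context (R : realType) d (T : measurableType d) (mu : {measure set T -> \bar R}).
Import HBNNSimple.

Lemma int_le (f g : T -> \bar R) : (forall x, 0 <= f x) -> (forall x, f x <= g x) ->
  \int[mu]_x f x <= \int[mu]_x g x.
Proof.
move=> f0 fg; rewrite !ge0_integralTE //; last by move=> x; exact: le_trans (f0 x) (fg x).
apply: ereal_sup_le => _ [h hf <-]; exists h => //= x; exact: le_trans (hf x) (fg x).
Qed.

Lemma int_scale_le (f : T -> \bar R) (k : R) : (0 < k)%R -> (forall x, 0 <= f x) ->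
  \int[mu]_x (k%:E * f x) <= k%:E * \int[mu]_x f x.
Proof.
move=> k0 f0; rewrite !ge0_integralTE //; last by move=> x; rewrite mule_ge0 // lee_fin ltW.
apply/ge_ereal_sup => _ [h hf <-].
have ki0 : (0 <= k^-1)%R by rewrite invr_ge0 ltW.
pose h' := scale_nnsfun h ki0.
have -> : sintegral mu h = k%:E * sintegral mu h'.
  rewrite /h' /scale_nnsfun /= sintegralrM muleA -EFinM divrr ?mul1e //.
  by rewrite unitfE gt_eqF.
rewrite lee_pmul2l ?lte_fin //.
all: idtac.
apply: ereal_sup_ubound; exists h' => //= x.
rewrite /h' /scale_nnsfun /= EFinM lee_pdivrMl //.
Qed.

Lemma int_scale_ge0 (f : T -> \bar R) (k : R) : (0 < k)%R -> (forall x, 0 <= f x) ->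
  \int[mu]_x (k%:E * f x) = k%:E * \int[mu]_x f x.
Proof.
move=> k0 f0; apply/eqP; rewrite eq_le int_scale_le //=.
have ki0 : (0 < k^-1)%R by rewrite invr_gt0.
have := @int_scale_le (fun x => k%:E * f x) _ ki0.
rewrite (_ : (fun x => k^-1%:E * (k%:E * f x)) = f); last first.
  apply/funext => x; rewrite muleA -EFinM mulVf ?mul1e //; exact: lt0r_neq0.
rewrite lee_pdivlMl //; apply => x; rewrite mule_ge0 // lee_fin ltW //.
Qed.

Lemma muleB_pos (k : R) (a b : \bar R) : (0 < k)%R -> 0 <= a -> 0 <= b ->
  k%:E * a - k%:E * b = k%:E * (a - b).
Proof.
move=> k0 a0 b0.
case: a a0 => [a| |] a0.
- by rewrite [RHS]muleBr // ?fin_num_adde_defr.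
- case: b b0 => [b| |] b0.
  + by rewrite [RHS]muleBr // ?fin_num_adde_defl.
  + by rewrite mulry gtr0_sg // mul1e addeNy mulrNy gtr0_sg // mul1e.
  + by move: (lt_le_trans ltNy0 b0); rewrite ltxx.
- by move: (lt_le_trans ltNy0 a0); rewrite ltxx.
Qed.

Lemma int_scale (f : T -> \bar R) (k : R) : (0 < k)%R ->
  \int[mu]_x (k%:E * f x) = k%:E * \int[mu]_x f x.
Proof.
move=> k0; rewrite integralE ge0_funeposM ?ge0_funenegM ?(ltW k0) //.
rewrite !int_scale_ge0 // muleB_pos //.
- by rewrite [X in _ = _ * X]integralE.
- by apply: integral_ge0 => x _; exact: funepos_ge0.
- by apply: integral_ge0 => x _; exact: funeneg_ge0.
Qed.
End aux.

Section main.
Context (R : realType) (d : measure_display) (E : measurableType d)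
  (M : R.-pker E ~> E) (H h : E -> R) (eps kappa : R).
Hypothesis Hpos : forall x, (0 < H x)%R.
Hypothesis hpos : forall x, (0 < h x)%R.
Hypothesis Mfin : forall x, (0 < Minvh M h x)%E /\ (Minvh M h x < +oo)%E.

Lemma mh_gt0 x : (0 < mh M h x)%R.
Proof. by rewrite /mh; apply: fine_gt0; case: (Mfin x) => -> ->. Qed.

Lemma MinvhE x : Minvh M h x = (mh M h x)%:E.
Proof. by rewrite /mh fineK // gt0_fin_numE; case: (Mfin x). Qed.

Lemma chain_exp_ext (K : (E -> \bar R) -> E -> \bar R) n (G1 G2 : seq E -> \bar R) x :
  (forall s, G1 s = G2 s) -> chain_exp K n G1 x = chain_exp K n G2 x.
Proof. by move=> e; rewrite (funext e). Qed.

Lemma chain_ge0 n (G : seq E -> \bar R) x : (forall s, 0 <= G s) ->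
  0 <= chain_exp (Mop M) n G x.
Proof.
elim: n G x => [|n IH] G x G0 //=.
by apply: integral_ge0 => y _; apply: IH.
Qed.

Lemma chain_scale n (G : seq E -> R) (k : R) x : (0 < k)%R ->
  chain_exp (Mop M) n (fun s => (k * G s)%:E) x
  = k%:E * chain_exp (Mop M) n (fun s => (G s)%:E) x.
Proof.
move=> k0; elim: n G x => [|n IH] G x /=; first by rewrite EFinM.
rewrite /Mop -int_scale //; apply: eq_integral => y _.
exact: (IH (fun s => G (y :: s))).
Qed.

Lemma P1 n (G : seq E -> R) (c : R) x : (0 < c)%R ->
  chain_exp (Mtw M h) n
    (fun s => (G s * (c / mh M h (last x s)) * \prod_(y <- s) Hh M H h y)%:E) x
  = (c / mh M h x)%:E * chain_exp (Mop M) n (fun s => (G s * \prod_(y <- s) H y)%:E) x.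
Proof.
move=> c0; elim: n G x => [|n IH] G x /=.
  by rewrite !big_nil !mulr1 EFinM muleC.
rewrite /Mtw /Mop -int_scale; last by rewrite divr_gt0 // mh_gt0.
apply: eq_integral => y _.
rewrite (chain_exp_ext _ _ _ (fun s => ((G (y :: s) * Hh M H h y) * (c / mh M h (last y s))
    * \prod_(z <- s) Hh M H h z)%:E)); last by move=> s; rewrite big_cons; congr EFin; ring.
rewrite IH.
rewrite (chain_exp_ext _ _ _ (fun s => (Hh M H h y * (G (y :: s) * \prod_(z <- s) H z))%:E));
  last by move=> s; congr EFin; ring.
rewrite chain_scale; last by rewrite /Hh !mulr_gt0 // mh_gt0.
rewrite (chain_exp_ext (Mop M) _ (fun s => (G (y :: s) * \prod_(z <- y :: s) H z)%:E)
   (fun s => (H y * (G (y :: s) * \prod_(z <- s) H z))%:E));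
  last by move=> s; rewrite big_cons; congr EFin; ring.
rewrite chain_scale //.
set V := chain_exp _ _ _ _.
rewrite !muleA -!EFinM muleAC -EFinM; congr (_ * _); congr EFin.
have := mh_gt0 y; have := mh_gt0 x; have := hpos y.
rewrite /Hh => h0 m1 m2; field.
by rewrite !gt_eqF.
Qed.

Hypothesis Hhle : forall x, (Hh M H h x <= 1 - eps)%R.
Hypothesis mhle : forall x y, (mh M h x <= kappa * mh M h y)%R.
Hypothesis eps1 : (0 < 1 - eps)%R.
Hypothesis kappa0 : (0 < kappa)%R.

Lemma bound x0 m (c : R) y : (0 < c)%R ->
  chain_exp (Mop M) m (fun s => (c * \prod_(z <- s) H z)%:E) y
  <= (c * ((1 - eps) ^+ m * kappa / mh M h x0) * mh M h y)%:E.
Proof.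
elim: m c y => [|m IH] c y c0 /=.
  rewrite big_nil mulr1 expr0 mul1r lee_fin -mulrA.
  apply: ler_peMr; first exact: ltW.
  by rewrite mulrAC ler_pdivlMr ?mh_gt0 // mul1r.
rewrite /Mop.
apply: (@le_trans _ _ (\int[M y]_z ((c * (1 - eps) * ((1 - eps) ^+ m * kappa / mh M h x0)) * (h z)^-1)%:E)).
  apply: int_le => z.
    by apply: chain_ge0 => s; rewrite lee_fin; apply: mulr_ge0; [exact: ltW | apply: prodr_ge0 => i _; exact: ltW].
  rewrite (chain_exp_ext _ _ _ (fun s => ((c * H z) * \prod_(w <- s) H w)%:E));
    last by move=> s; rewrite big_cons mulrA.
  apply: (le_trans (IH (c * H z)%R z (mulr_gt0 c0 (Hpos z)))).
  rewrite lee_fin.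
  have hz := hpos z; have mz := mh_gt0 z; have Hz := Hhle z; move: Hz; rewrite /Hh => Hz.
  set K := ((1 - eps) ^+ m * kappa / mh M h x0)%R.
  have K0 : (0 <= c * K)%R.
    by rewrite /K mulr_ge0 ?divr_ge0 ?mulr_ge0 ?exprn_ge0 ?ltW ?mh_gt0.
  have -> : (c * H z * K * mh M h z = (c * K) * (H z * mh M h z))%R by ring.
  have -> : (c * (1 - eps) * K / h z = (c * K) * ((1 - eps) / h z))%R by ring.
  rewrite ler_wpM2l //.
  by rewrite ler_pdivlMr // mulrAC.
under eq_integral do rewrite EFinM.
have Kp : (0 < c * (1 - eps) * ((1 - eps) ^+ m * kappa / mh M h x0))%R.
  by rewrite !mulr_gt0 ?invr_gt0 ?exprn_gt0 ?mh_gt0.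
rewrite int_scale_ge0 //; last by move=> z; rewrite lee_fin invr_ge0 ltW.
rewrite -/(Minvh M h y) MinvhE -EFinM lee_fin le_eqVlt; apply/orP; left; apply/eqP.
rewrite exprS; ring.
Qed.
End main.

Local Close Scope ereal_scope.
Local Open Scope ring_scope.

Theorem mainTheorem11 (R : realType) (d : measure_display) (E : measurableType d)
  (M : R.-pker E ~> E) (H h : E -> R) (eps kappa : R) :
  measurable_fun [set: E] H -> (forall x, 0 < H x) ->
  measurable_fun [set: E] h -> (forall x, 0 < h x) ->
  (forall x, (0 < Minvh M h x)%E /\ (Minvh M h x < +oo)%E) ->
  0 < eps < 1 -> 0 < kappa ->
  (forall x, Hh M H h x <= 1 - eps) ->
  (forall x y, mh M h x <= kappa * mh M h y) ->
  (forall (n : nat), (1 <= n)%N ->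
     forall (F : seq E -> R),
       measurable_fun [set: n.-tuple E] (fun t : n.-tuple E => F (tval t)) ->
       (exists C : R, forall t : n.-tuple E, `|F (tval t)| <= C) ->
       forall x : E,
         chain_exp (Mop M) n
           (fun s => (F s * \prod_(y <- s) H y)%:E) x
         = chain_exp (Mtw M h) n
           (fun s => (F s * (mh M h x / mh M h (last x s))
                       * \prod_(y <- s) Hh M H h y)%:E) x)
  /\
  (forall (n : nat), (1 <= n)%N ->
     (ereal_sup [set chain_exp (Mop M) n (fun s => (\prod_(y <- s) H y)%:E) x
                | x in [set: E]]
      <= (kappa * (1 - eps) ^+ n)%:E)%E).

Proof.
move=> _ Hpos _ hpos Mfin /andP[e0 e1] k0 Hhle mhle.
have eps1 : (0 < 1 - eps)%R by rewrite subr_gt0.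
have mhp x : 0 < mh M h x by exact: (@mh_gt0 R d E M h Mfin x).
split.
- move=> n _ F _ _ x.
  rewrite P1 // divff ?mul1e //.
  by rewrite gt_eqF.
- move=> n _; apply: ge_ereal_sup => _ [x _ <-].
  have B := @bound R d E M H h eps kappa Hpos hpos Mfin Hhle mhle eps1 k0 x n 1 x ltr01.
  rewrite (@chain_exp_ext R d E _ _ _ (fun s => (\prod_(y <- s) H y)%:E)) in B;
    last by move=> s; rewrite mul1r.
  apply: (le_trans B); rewrite lee_fin le_eqVlt; apply/orP; left; apply/eqP.
  have := mhp x => mx.
  by field; rewrite gt_eqF.
Qed.
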